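(* Let $v$ be an indeterminate and $q=v^2$. For all integers $m,n\in\mathbb{Z}$, the following identity holds in $\mathbb{Q}(v)((x))$: \[ \sigma_m^0\,\sigma_n^0=\sum_{i=0}^{\infty}\gamma_{m,n}^{i}\,\sigma_{m+n-i}^0, \qquad\text{where}\qquad \gamma_{m,n}^{i}=\{m\}_i\,\{n\}_i\,\begin{bmatrix} m+n+1\\ i\end{bmatrix}. \] (The infinite sum converges $x$-adically.)
   Context: Notation: for $n\in\mathbb{Z}$ and $i\in\mathbb{Z}_{\ge0}$, $\{n\}=v^n-v^{-n}$, $\{n\}_i=\{n\}\{n-1\}\cdots\{n-i+1\}$ (with $\{n\}_0=1$), $[n]=\frac{v^n-v^{-n}}{v-v^{-1}}$, $[i]!=[i][i-1]\cdots[1]$, and $\begin{bmatrix} n\\ i\end{bmatrix}=\frac{[n][n-1]\cdots[n-i+1]}{[i]!}$ (defined also for negative $n$). For $n\in\mathbb{Z}$ define the rational function $\sigma_n\in\mathbb{Q}(x,q)$ by $\sigma_n=\prod_{i=1}^{n}(x+x^{-1}-q^i-q^{-i})$ if $n\ge 0$ and $\sigma_n=\prod_{i=0}^{-n-1}(x+x^{-1}-q^i-q^{-i})^{-1}$ if $n<0$. Let $\sigma_n^0\in\mathbb{Z}[q^{\pm1}]((x))$ denote the Laurent expansion of $\sigma_n$ at $x=0$ (for $n<0$ this is a power series divisible by $x^{-n}$). *)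

(* Defs.v *)
From HB Require Import structures.
From mathcomp Require Import all_boot all_order all_algebra.
From mathcomp Require Import fraction generic_quotient.
Set Implicit Arguments. Unset Strict Implicit. Unset Printing Implicit Defensive.
Import Order.TTheory GRing.Theory Num.Theory.
Local Open Scope ring_scope.

Section Series.
Variable K : fieldType.

Definition ps := nat -> K.

Definition ps_mul (f g : ps) : ps :=
  fun n => \sum_(i < n.+1) f i * g (n - i)%N.

(* first n+1 coefficients of the multiplicative inverse of f (f 0 <> 0) *)
Fixpoint ps_inv_aux (f : ps) (n : nat) : seq K :=
  match n with
  | 0 => [:: (f 0%N)^-1]
  | n'.+1 =>
      let s := ps_inv_aux f n' in
      rcons s (- (f 0%N)^-1 * \sum_(1 <= i < n'.+2) f i * nth 0 s (n'.+1 - i))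
  end.

Definition ps_inv (f : ps) : ps := fun n => nth 0 (ps_inv_aux f n) n.

(* a formal Laurent series  x^(s.1) * s.2  *)
Definition ls := (int * ps)%type.

Definition ls_coef (s : ls) (k : int) : K :=
  match (k - s.1)%R with Posz j => s.2 j | Negz _ => 0 end.

Definition ls_mul (s t : ls) : ls := ((s.1 + t.1)%R, ps_mul s.2 t.2).

(* Laurent expansion at x = 0 of p / d (d <> 0 polynomials):
   d = x^j d' with d'(0) <> 0, and p/d = x^(-j) * p * d'^(-1). *)
Definition laurent_pq (p d : {poly K}) : ls :=
  let j := find (fun c => c != 0) d in
  ((- (j%:Z))%R, ps_mul (fun i => p`_i) (ps_inv (fun i => d`_(i + j)))).

Definition laurent (r : {fraction {poly K}}) : ls :=
  laurent_pq \n_(repr r) \d_(repr r).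

Definition xF : {fraction {poly K}} := (@FracField.tofrac _ 'X).
Definition cF (c : K) : {fraction {poly K}} := @FracField.tofrac _ c%:P.

Definition sigma_fac (q : K) (i : nat) : {fraction {poly K}} :=
  xF + xF^-1 - cF (q ^+ i) - cF (q ^+ i)^-1.

Definition sigma (q : K) (n : int) : {fraction {poly K}} :=
  match n with
  | Posz n' => \prod_(1 <= i < n'.+1) sigma_fac q i
  | Negz n' => (\prod_(0 <= i < n'.+1) sigma_fac q i)^-1
  end.
(* note: Negz n' = -(n'+1), so the product is over i = 0 .. -n-1 *)

Definition sigma0 (q : K) (n : int) : ls := laurent (sigma q n).
End Series.

Definition Qv := {fraction {poly rat}}.
Definition vv : Qv := (@FracField.tofrac _ 'X).
Definition qq : Qv := vv ^+ 2.

Definition qbr (n : int) : Qv := vv ^ n - vv ^ (- n).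
Definition qbr_fall (n : int) (i : nat) : Qv := \prod_(k < i) qbr (n - k%:Z).
Definition qint (n : int) : Qv := (vv ^ n - vv ^ (- n)) / (vv - vv^-1).
Definition qfact (i : nat) : Qv := \prod_(1 <= k < i.+1) qint k%:Z.
Definition qbinom (n : int) (i : nat) : Qv :=
  (\prod_(k < i) qint (n - k%:Z)) / qfact i.

Definition gamma (m n : int) (i : nat) : Qv :=
  qbr_fall m i * qbr_fall n i * qbinom (m + n + 1) i.

(* Main.v *)
Require Import Defs.
From HB Require Import structures.
From mathcomp Require Import all_boot all_order all_algebra.
From mathcomp Require Import fraction generic_quotient.
From mathcomp Require Import ring zify.
Import GRing.Theory.
Local Open Scope ring_scope.
Set Implicit Arguments. Unset Strict Implicit. Unset Printing Implicit Defensive.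
Import Order.TTheory Num.Theory.

Section Series.
Variable K : fieldType.
Implicit Types f g : nat -> K.

Lemma sum_ext (F : nat -> K) a b : (a <= b)%N -> (forall i, (a <= i)%N -> F i = 0) ->
  \sum_(i < b) F i = \sum_(i < a) F i.
Proof.
move=> ab h; rewrite -(subnKC ab) big_split_ord /= [X in _ + X]big1 ?addr0 //.
move=> i _; apply: h; exact: leq_addr.
Qed.

Definition tr (N : nat) (f : nat -> K) : {poly K} := \poly_(i < N) f i.

Lemma ps_mulE N (f g : nat -> K) n : (n < N)%N -> ps_mul f g n = (tr N f * tr N g)`_n.
Proof.
move=> nN; rewrite coefM /ps_mul; apply: eq_bigr => i _.
have := ltn_ord i; rewrite ltnS => iN.
rewrite !coef_poly ifT; last by lia.
by rewrite ifT; last by lia.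
Qed.

Definition eqN N (A B : {poly K}) := forall i, (i < N)%N -> A`_i = B`_i.

Lemma eqN_mul N A A' B B' : eqN N A A' -> eqN N B B' -> eqN N (A * B) (A' * B').
Proof.
move=> hA hB i iN; rewrite !coefM; apply: eq_bigr => j _.
have := ltn_ord j; rewrite ltnS => ji.
rewrite hA ?hB //; lia.
Qed.

Lemma eqN_refl N A : eqN N A A. Proof. by []. Qed.

Lemma tr_mul N f g : eqN N (tr N (ps_mul f g)) (tr N f * tr N g).
Proof. move=> i iN; rewrite coef_poly iN; exact: ps_mulE. Qed.

Lemma ps_mulA f g (h : nat -> K) n : ps_mul (ps_mul f g) h n = ps_mul f (ps_mul g h) n.
Proof.
rewrite (ps_mulE (N:=n.+1)) // (ps_mulE (N := n.+1)) //.
rewrite (eqN_mul (@tr_mul n.+1 f g) (@eqN_refl n.+1 _) (ltnSn n)).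
rewrite (eqN_mul (@eqN_refl n.+1 _) (@tr_mul n.+1 g h) (ltnSn n)).
by rewrite mulrA.
Qed.

Lemma ps_mulC f g n : ps_mul f g n = ps_mul g f n.
Proof. by rewrite (ps_mulE (N:=n.+1)) // (ps_mulE (N := n.+1)) // mulrC. Qed.

Lemma ps_mul_ACA f g (h k : nat -> K) n :
  ps_mul (ps_mul f g) (ps_mul h k) n = ps_mul (ps_mul f h) (ps_mul g k) n.
Proof.
rewrite (ps_mulE (N:=n.+1)) // (ps_mulE (N := n.+1)) //.
rewrite (eqN_mul (@tr_mul n.+1 f g) (@tr_mul n.+1 h k) (ltnSn n)).
rewrite (eqN_mul (@tr_mul n.+1 f h) (@tr_mul n.+1 g k) (ltnSn n)).
by rewrite mulrACA.
Qed.

Lemma ps_mul_ext f (f' : nat -> K) g (g' : nat -> K) n : (forall i, f i = f' i) -> (forall i, g i = g' i) ->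
  ps_mul f g n = ps_mul f' g' n.
Proof. by move=> hf hg; apply: eq_bigr => i _; rewrite hf hg. Qed.

Definition ps1 : nat -> K := fun i => (i == 0%N)%:R.

Lemma ps_mul1 f n : ps_mul ps1 f n = f n.
Proof.
rewrite (ps_mulE (N:=n.+1)) //.
have e : eqN n.+1 (tr n.+1 ps1) 1 by move=> i iN; rewrite coef_poly iN coef1.
by rewrite (eqN_mul e (@eqN_refl n.+1 _) (ltnSn n)) mul1r coef_poly ltnSn.
Qed.

Definition shn (k : nat) (f : nat -> K) : nat -> K :=
  fun i => if (i < k)%N then 0 else f (i - k)%N.

Lemma ps_mul_shn k f g n : ps_mul (shn k f) g n = shn k (ps_mul f g) n.
Proof.
rewrite (ps_mulE (N:=n.+1)) //.
have e : eqN n.+1 (tr n.+1 (shn k f)) ('X^k * tr n.+1 f).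
  move=> i iN; rewrite coef_poly iN coefXnM /shn; case: ifP => // _.
  by rewrite coef_poly ifT //; lia.
rewrite (eqN_mul e (@eqN_refl n.+1 _) (ltnSn n)) -mulrA coefXnM /shn.
case: ifP => // _; rewrite (ps_mulE (N:=n.+1)) //; lia.
Qed.

Lemma size_inv_aux f n : size (ps_inv_aux f n) = n.+1.
Proof. by elim: n => //= n IH; rewrite size_rcons IH. Qed.

Lemma nth_inv_aux f n i : (i <= n)%N -> nth 0 (ps_inv_aux f n) i = ps_inv f i.
Proof.
elim: n i => [|n IH] i hi.
  by have -> : i = 0%N by lia.
case: (ltnP i n.+1) => h.
  by rewrite /= nth_rcons size_inv_aux h IH.
by have -> : i = n.+1 by lia.
Qed.

Lemma ps_invS f n : ps_inv f n.+1 =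
  - (f 0%N)^-1 * \sum_(i < n.+1) f i.+1 * ps_inv f (n - i)%N.
Proof.
rewrite {1}/ps_inv /= nth_rcons size_inv_aux ltnn eqxx.
rewrite big_add1 /= big_mkord; congr (_ * _); apply: eq_bigr => i _.
rewrite nth_inv_aux; last by lia.
by rewrite subSS.
Qed.

Lemma ps_mul_inv f n : f 0%N != 0 -> ps_mul f (ps_inv f) n = ps1 n.
Proof.
move=> f0; case: n => [|n].
  by rewrite /ps_mul big_ord1 /ps_inv /= mulfV.
rewrite /ps_mul big_ord_recl /= subn0 ps_invS mulrA mulrN mulfV // mulN1r.
rewrite /ps1 /=; apply/eqP; rewrite addrC subr_eq0; apply/eqP.
by apply: eq_bigr => i _.
Qed.

Local Notation c := (@ls_coef K).

Lemma ls_coef_lt (s : ls K) k : k < s.1 -> c s k = 0.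
Proof. rewrite /ls_coef; case E: (k - s.1) => [j|j] // h; lia. Qed.

Lemma ls_coef_add (s : ls K) j : c s (s.1 + j%:Z) = s.2 j.
Proof. by rewrite /ls_coef (addrC s.1) addrK. Qed.

Lemma ls_ext (s t : ls K) : s.1 = t.1 -> (forall i, s.2 i = t.2 i) -> forall k, c s k = c t k.
Proof. by move=> h1 h2 k; rewrite /ls_coef h1; case: (k - t.1). Qed.

Lemma ls_coef_cases (s : ls K) k : (k < s.1 /\ c s k = 0) \/ (exists j : nat, k = s.1 + j%:Z /\ c s k = s.2 j).
Proof.
case: (ltrP k s.1) => h; first by left; split => //; exact: ls_coef_lt.
right; exists `|k - s.1|%N.
have e : k = s.1 + (`|k - s.1|%N)%:Z by lia.
by split => //; rewrite {1}e ls_coef_add.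
Qed.

Lemma lower_eq (e : int) (f : nat -> K) (a : nat) k : c (e - a%:Z, shn a f) k = c (e, f) k.
Proof.
case: (ls_coef_cases (e, f) k) => [[h ->]|[j [-> ->]]] /=.
  case: (ls_coef_cases (e - a%:Z, shn a f) k) => [[_ ->]|[j [h1 ->]]] //=.
  rewrite /shn ifT //; move: h h1 => /=; lia.
have -> : e + j%:Z = (e - a%:Z) + (j + a)%N%:Z by lia.
by rewrite ls_coef_add /= /shn ifF ?addnK //; lia.
Qed.

Lemma ls_mulA (s t u : ls K) k : c (ls_mul (ls_mul s t) u) k = c (ls_mul s (ls_mul t u)) k.
Proof. apply: ls_ext => /=; [by rewrite addrA | move=> i; exact: ps_mulA]. Qed.

Lemma ls_mulC (s t : ls K) k : c (ls_mul s t) k = c (ls_mul t s) k.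
Proof. apply: ls_ext => /=; [by rewrite addrC | move=> i; exact: ps_mulC]. Qed.

Lemma ls_mulACA (s t u w : ls K) k :
  c (ls_mul (ls_mul s t) (ls_mul u w)) k = c (ls_mul (ls_mul s u) (ls_mul t w)) k.
Proof. apply: ls_ext => /=; [by rewrite addrACA | move=> i; exact: ps_mul_ACA]. Qed.

Lemma ls_mul_lowerl (s t : ls K) (a : nat) k :
  c (ls_mul (s.1 - a%:Z, shn a s.2) t) k = c (ls_mul s t) k.
Proof.
rewrite -[RHS](lower_eq _ _ a).
apply: ls_ext => /=; first by rewrite addrAC.
move=> i; exact: ps_mul_shn.
Qed.

Lemma compat_l (s s' t : ls K) : (forall k, c s k = c s' k) ->
  forall k, c (ls_mul s t) k = c (ls_mul s' t) k.
Proof.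
move=> h k.
pose E : int := - (`|s.1|%N%:Z + `|s'.1|%N%:Z).
pose a := `|s.1 - E|%N; pose a' := `|s'.1 - E|%N.
have ea : s.1 - a%:Z = E by rewrite /a /E; lia.
have ea' : s'.1 - a'%:Z = E by rewrite /a' /E; lia.
have e1 : forall k', c (E, shn a s.2) k' = c s k'.
  by move=> k'; rewrite -ea; case: (s) => ??; exact: lower_eq.
have e2 : forall k', c (E, shn a' s'.2) k' = c s' k'.
  by move=> k'; rewrite -ea'; case: (s') => ??; exact: lower_eq.
have hs : forall j, shn a s.2 j = shn a' s'.2 j.
  move=> j.
  transitivity (c (E, shn a s.2) (E + j%:Z)); first by rewrite ls_coef_add.
  transitivity (c (E, shn a' s'.2) (E + j%:Z)); last by rewrite ls_coef_add.
  by rewrite e1 e2 h.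
rewrite -(ls_mul_lowerl s t a) -(ls_mul_lowerl s' t a').
apply: ls_ext => /=; first by rewrite ea ea'.
by move=> i; apply: ps_mul_ext.
Qed.

Lemma compat_r (s t t' : ls K) : (forall k, c t k = c t' k) ->
  forall k, c (ls_mul s t) k = c (ls_mul s t') k.
Proof. by move=> h k; rewrite ls_mulC (compat_l _ h) ls_mulC. Qed.

Definition pls (p : {poly K}) : ls K := (0, fun i => p`_i).

Lemma pls_mul p q k : c (ls_mul (pls p) (pls q)) k = c (pls (p * q)) k.
Proof. apply: ls_ext => /=; first by rewrite addr0. by move=> i; rewrite coefM. Qed.

Definition pc (d : {poly K}) (h : int -> K) (k : int) : K :=
  \sum_(i < size d) d`_i * h (k - i%:Z).

Lemma pc_N (d : {poly K}) (h : int -> K) k N : (size d <= N)%N -> pc d h k = \sum_(i < N) d`_i * h (k - i%:Z).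
Proof.
move=> hN; rewrite /pc (sum_ext (F := fun i => d`_i * h (k - i%:Z)) hN) //.
by move=> i hi; rewrite nth_default // mul0r.
Qed.

Lemma ls_mul_polyE (e : int) (d : {poly K}) (s : ls K) k :
  c (ls_mul (e, fun i => d`_i) s) k = pc d (c s) (k - e).
Proof.
case: (ls_coef_cases (ls_mul (e, fun i => d`_i) s) k) => [[/= h ->]|[j [/= hk ->]]].
  rewrite /pc big1 // => i _; rewrite ls_coef_lt ?mulr0 //; lia.
pose G i := d`_i * (if (i <= j)%N then s.2 (j - i)%N else 0).
rewrite /ps_mul (pc_N _ _ (leq_maxl (size d) j.+1)).
rewrite (eq_bigr (fun i : 'I_j.+1 => G i)); last first.
  by move=> i _; rewrite /G ifT //; have := ltn_ord i; lia.
rewrite -(sum_ext (F := G) (leq_maxr (size d) j.+1)); last first.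
  by move=> i hi; rewrite /G ifF ?mulr0 //; lia.
apply: eq_bigr => i _; rewrite /G; case: ifP => hij.
  have -> : k - e - (nat_of_ord i)%:Z = s.1 + (j - i)%N%:Z by lia.
  by rewrite ls_coef_add.
by rewrite ls_coef_lt //; lia.
Qed.

Definition j0 (d : {poly K}) : nat := find (fun x => x != 0) d.

Lemma j0_lt (d : {poly K}) : d != 0 -> (j0 d < size d)%N.
Proof.
move=> d0; rewrite /j0 -has_find; apply/hasP; exists (lead_coef d).
  by rewrite /lead_coef mem_nth // prednK // lt0n size_poly_eq0.
by rewrite lead_coef_eq0.
Qed.

Lemma j0_coef (d : {poly K}) : d != 0 -> d`_(j0 d) != 0.
Proof. move=> d0; have := j0_lt d0; rewrite -has_find => hh; exact: (nth_find 0 hh). Qed.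

Lemma j0_before (d : {poly K}) i : (i < j0 d)%N -> d`_i = 0.
Proof. by move=> h; apply/eqP; have := before_find 0 h; move/negbFE. Qed.

Lemma pc_low (d : {poly K}) (h : int -> K) j : d != 0 -> (forall j', j' < j -> h j' = 0) ->
  pc d h (j + (j0 d)%:Z) = d`_(j0 d) * h j.
Proof.
move=> d0 hj; rewrite /pc (bigD1 (Ordinal (j0_lt d0))) //= big1 ?addr0.
  by congr (_ * h _); lia.
move=> i /eqP hi; case: (ltnP i (j0 d)) => h1.
  by rewrite j0_before ?mul0r.
rewrite hj ?mulr0 //.
have : nat_of_ord i <> j0 d by move=> e; apply: hi; apply: val_inj.
lia.
Qed.

Lemma cancel_part (d : {poly K}) (h : int -> K) (B K0 : int) : d != 0 ->
  (forall j, j < B -> h j = 0) -> (forall k, k < K0 -> pc d h (k + (j0 d)%:Z) = 0) ->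
  forall j, j < K0 -> h j = 0.
Proof.
move=> d0 hB hK.
have P : forall t : nat, forall j, j < B + t%:Z -> j < K0 -> h j = 0.
  elim=> [|t IH] j h1 h2; first by apply: hB; lia.
  case: (ltrP j (B + t%:Z)) => h3; first exact: IH.
  have := hK j h2; rewrite pc_low //; last by move=> j' hj'; apply: IH; lia.
  by move/eqP; rewrite mulf_eq0 (negbTE (j0_coef d0)) /= => /eqP.
move=> j hj; apply: (P `|j - B|.+1 j) => //; lia.
Qed.

Lemma cancel_full (d : {poly K}) (h : int -> K) (B : int) : d != 0 ->
  (forall j, j < B -> h j = 0) -> (forall k, pc d h k = 0) -> forall j, h j = 0.
Proof.
move=> d0 hB hK j; apply: (@cancel_part d h B (j + 1)) => //; lia.
Qed.

End Series.

Lemma swap3 (R : comRingType) (a b x : R) : a * (x * b) = b * (x * a).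
Proof. by rewrite mulrCA [RHS]mulrCA (mulrC a). Qed.

Lemma facid (F : fieldType) (x B C : F) : x != 0 ->
  (x + x^-1 - B - C) * x = x ^+ 2 - (B + C) * x + 1.
Proof. by move=> x0; field. Qed.

Section Laur.
Variable K : fieldType.
Local Notation c := (@ls_coef K).
Local Notation tf := (@FracField.tofrac _).

Lemma frac_repr (r : {fraction {poly K}}) :
  r * tf (\d_(repr r)) = tf (\n_(repr r)).
Proof.
rewrite -{1}[r]reprK.
unlock FracField.tofrac.
rewrite -[_ * _]/(FracField.mul _ _) !piE.
apply/eqmodP => /=; rewrite FracField.equivfE.
rewrite /FracField.mulf !numden_Ratio ?oner_neq0 //.
  by rewrite !mulr1 mulrC.
  by rewrite mulr1; apply: denom_ratioP.
by rewrite mulr1; apply: denom_ratioP.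
Qed.

Lemma LPQ (P D : {poly K}) : D != 0 ->
  forall k, c (ls_mul (pls D) (laurent_pq P D)) k = c (pls P) k.
Proof.
move=> D0 k.
pose j := j0 D.
pose D' := fun i => D`_(i + j)%N.
pose F := ps_mul (fun i => P`_i) (ps_inv D').
have hD : forall i, D`_i = shn j D' i.
  move=> i; rewrite /shn; case: ifP => h; first exact: j0_before.
  by rewrite /D' subnK //; lia.
have D'0 : D' 0%N != 0 by rewrite /D' add0n; exact: j0_coef.
have hF : forall n, ps_mul D' F n = P`_n.
  move=> n; rewrite /F.
  transitivity (ps_mul (ps_mul (fun i => P`_i) D') (ps_inv D') n).
    by rewrite -ps_mulA; apply: ps_mul_ext => // i; exact: ps_mulC.
  rewrite ps_mulA.
  transitivity (ps_mul (fun i => P`_i) (ps1 K) n).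
    by apply: ps_mul_ext => // i; exact: ps_mul_inv.
  by rewrite ps_mulC ps_mul1.
transitivity (c (0 - j%:Z, shn j (fun n => P`_n)) k); last first.
  by rewrite lower_eq.
apply: ls_ext => /=; first by rewrite add0r.
move=> n; transitivity (ps_mul (shn j D') F n); first by apply: ps_mul_ext.
rewrite ps_mul_shn /shn; case: ifP => // _; exact: hF.
Qed.

Lemma pc_sub (d : {poly K}) (h1 h2 : int -> K) k :
  pc d (fun j => h1 j - h2 j) k = pc d h1 k - pc d h2 k.
Proof. by rewrite /pc -sumrB; apply: eq_bigr => i _; rewrite mulrBr. Qed.

Lemma CH (r : {fraction {poly K}}) (p d : {poly K}) (s : ls K) :
  r * tf d = tf p -> d != 0 ->
  (forall k, c (ls_mul (pls d) s) k = c (pls p) k) ->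
  forall k, c (laurent r) k = c s k.
Proof.
move=> hr d0 hs.
set P := \n_(repr r); set D := \d_(repr r).
have D0 : D != 0 by exact: denom_ratioP.
have hR := frac_repr r.
have ePD : d * P = D * p.
  apply/eqP; rewrite -tofrac_eq !tofracM -hR -hr; apply/eqP; exact: swap3.
set L := laurent r.
have h1 : forall k, c (ls_mul (pls (d * D)) L) k = c (pls (d * P)) k.
  move=> k; rewrite -(compat_l _ (pls_mul d D)) ls_mulA.
  by rewrite (compat_r _ (LPQ P D0)) pls_mul.
have h2 : forall k, c (ls_mul (pls (d * D)) s) k = c (pls (D * p)) k.
  move=> k; rewrite mulrC -(compat_l _ (pls_mul D d)) ls_mulA.
  by rewrite (compat_r _ hs) pls_mul.
have H : forall k, c L k - c s k = 0.
  apply: (@cancel_full _ (d * D) _ (- (`|L.1|%N%:Z + `|s.1|%N%:Z))).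
  - by rewrite mulf_neq0.
  - move=> j hj; rewrite !ls_coef_lt ?subrr //; lia.
  move=> k; rewrite pc_sub.
  have e1 := ls_mul_polyE 0 (d * D) L k; have e2 := ls_mul_polyE 0 (d * D) s k.
  rewrite subr0 in e1 e2.
  rewrite -e1 -e2; rewrite -/(pls (d * D)) h1 h2 ePD; exact: subrr.
by move=> k; apply/eqP; rewrite -subr_eq0 H.
Qed.

Lemma MUL (r1 r2 : {fraction {poly K}}) k :
  c (laurent (r1 * r2)) k = c (ls_mul (laurent r1) (laurent r2)) k.
Proof.
set P1 := \n_(repr r1); set D1 := \d_(repr r1).
set P2 := \n_(repr r2); set D2 := \d_(repr r2).
have D10 : D1 != 0 by exact: denom_ratioP.
have D20 : D2 != 0 by exact: denom_ratioP.
apply: (@CH _ (P1 * P2) (D1 * D2)).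
- by rewrite !tofracM mulrACA !frac_repr.
- by rewrite mulf_neq0.
move=> k'.
rewrite -(compat_l _ (pls_mul D1 D2)) ls_mulACA.
rewrite (compat_l _ (LPQ P1 D10)) (compat_r _ (LPQ P2 D20)).
exact: pls_mul.
Qed.

Definition P2 (a : K) : {poly K} := \poly_(i < 3) (if i == 1%N then - a else 1).
Definition gls (a : K) : ls K := ((-1)%R, fun i => (P2 a)`_i).
Definition Tf (a : K) (h : int -> K) (k : int) : K := h (k - 1) + h (k + 1) - a * h k.

Lemma P2E a : P2 a = 'X^2 - a%:P * 'X + 1.
Proof.
apply/polyP => i; rewrite coef_poly coefD coefB coefXn coefCM coefX coef1.
by case: i => [|[|[|i]]] /=; rewrite ?mulr0 ?mulr1 ?subr0 ?sub0r ?add0r ?addr0.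
Qed.

Lemma fac_eq (q : K) i : sigma_fac q i * tf 'X = tf (P2 (q ^+ i + q ^- i)).
Proof.
rewrite P2E tofracD tofracB tofracM tofracM polyCD tofracD tofrac1.
rewrite /sigma_fac /xF /cF facid ?expr2 //.
by rewrite tofrac_eq0 polyX_eq0.
Qed.

Lemma P2_neq0 a : P2 a != 0.
Proof.
apply/eqP => h; have := congr1 (fun p : {poly K} => p`_0) h.
rewrite coef_poly /= coef0 => /eqP; by rewrite oner_eq0.
Qed.

Lemma fac_neq0 (q : K) i : sigma_fac q i != 0.
Proof.
apply/eqP => h; have := fac_eq q i; rewrite h mul0r => /esym/eqP.
by rewrite tofrac_eq0 (negbTE (P2_neq0 _)).
Qed.

Lemma L_fac (q : K) i k : c (laurent (sigma_fac q i)) k = c (gls (q ^+ i + q ^- i)) k.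
Proof.
apply: (CH (fac_eq q i)); first by rewrite polyX_eq0.
move=> k'; set a := q ^+ i + q ^- i.
transitivity (c (0 - 1, shn 1 (fun n => (P2 a)`_n)) k'); last by rewrite (lower_eq _ _ 1).
apply: ls_ext => /=; first by rewrite add0r.
move=> n; transitivity (ps_mul (shn 1 (ps1 K)) (fun n => (P2 a)`_n) n).
  apply: ps_mul_ext => // j; rewrite coefX /shn /ps1; case: j => [|j] //=.
  by rewrite eqSS subn1.
rewrite (@ps_mul_shn K 1 (ps1 K)) /shn; case: ifP => // _; by rewrite ps_mul1.
Qed.

Lemma L_mul_fac (q : K) i r k :
  c (laurent (r * sigma_fac q i)) k = Tf (q ^+ i + q ^- i) (c (laurent r)) k.
Proof.
rewrite MUL (compat_r _ (L_fac q i)) ls_mulC /gls ls_mul_polyE.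
rewrite (pc_N _ _ (size_poly 3 _)).
rewrite !big_ord_recl big_ord0 /= !coef_poly /= /bump /=.
rewrite /Tf !mul1r addr0.
have -> : k - -1 = k + 1 by lia.
have -> : k + 1 - (1 + 0)%N%:Z = k by lia.
have -> : k + 1 - (1 + (1 + 0))%N%:Z = k - 1 by lia.
set A := c _ (k + 1); set B := c _ (k - 1).
ring.
Qed.

Lemma sigma_rec (q : K) (k : int) : sigma q k = sigma q (k - 1) * sigma_fac q `|k|%N.
Proof.
case: k => [[|n]|n].
- have -> : (Posz 0 - 1) = Negz 0 by [].
  by rewrite /= big_geq // big_nat1 mulVf // fac_neq0.
- have -> : (Posz n.+1 - 1) = Posz n by lia.
  by rewrite /= big_nat_recr.
- have -> : (Negz n - 1) = Negz n.+1 by lia.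
  by rewrite /= [in RHS]big_nat_recr //= invfM divfK // fac_neq0.
Qed.

End Laur.

Lemma key_gen (F : fieldType) (u U V W : F) : u != 0 -> U != 0 -> V != 0 -> W != 0 -> u ^+ 2 - 1 != 0 ->
  (U * u - (U * u)^-1) * (V / W - (V / W)^-1) * ((U * V * u ^+ 2 - (U * V * u ^+ 2)^-1) / (u - u^-1)) =
  (U / W - (U / W)^-1) * (V / W - (V/W)^-1) * ((U * V * u / W - (U * V * u / W)^-1) / (u - u^-1))
  + ((W * u - (W * u)^-1) / (u - u^-1)) * (((U * V * u / W) ^+ 2 + ((U * V * u / W) ^+ 2)^-1) - ((U * u) ^+ 2 + ((U * u) ^+ 2)^-1)).
Proof.
move=> u0 U0 V0 W0 uu.
have uu' : u - u^-1 != 0.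
  apply: contraNneq uu => h; have -> : u ^+ 2 - 1 = u * (u - u^-1) by field.
  by rewrite h mulr0.
field.
by rewrite u0 U0 W0 V0 -expr2 uu.
Qed.

Lemma gen_comb (F : fieldType) (X1 Y Z Wi b1 b2 b3 t1 t2 t3 d : F) : t3 != 0 ->
  b1 * b2 * t1 = b3 * b2 * t2 + t3 * d ->
  b1 * X1 * (Y * b2) * (t1 * Z * (Wi * t3^-1)) =
  X1 * b3 * (Y * b2) * (Z * t2 * (Wi * t3^-1)) + X1 * Y * (Z * Wi) * d.
Proof.
move=> t30 h.
have -> : d = (b1 * b2 * t1 - b3 * b2 * t2) / t3.
  by rewrite h addrC addKr mulrC mulKf.
by field.
Qed.

Local Notation u := vv.

Lemma vv_neq0 : u != 0.
Proof. by rewrite /vv tofrac_eq0 polyX_eq0. Qed.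

Lemma vvXn_neq1 N : (0 < N)%N -> u ^+ N != 1.
Proof.
move=> N0; rewrite /vv -tofracXn -tofrac1 tofrac_eq.
apply/eqP => /(congr1 (fun p : {poly rat} => size p)).
by rewrite size_polyXn size_poly1; lia.
Qed.

Lemma brz_neq0 N : (0 < N)%N -> u ^+ N - (u ^+ N)^-1 != 0.
Proof.
move=> N0; apply/eqP => h.
have : u ^+ (N + N) = 1.
  have hx : u ^+ N = (u ^+ N)^-1 by apply/eqP; rewrite -subr_eq0 h.
  rewrite exprD {2}hx mulfV // expf_neq0 // vv_neq0.
  done.
move=> e; have h2 : (0 < N + N)%N by lia.
by have := vvXn_neq1 h2; rewrite e eqxx.
Qed.

Lemma uu_neq0 : u ^+ 2 - 1 != 0.
Proof. rewrite subr_eq0; exact: vvXn_neq1. Qed.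

Lemma den_neq0 : u - u^-1 != 0.
Proof. have := brz_neq0 (ltn0Sn 0); rewrite expr1; exact: id. Qed.

Lemma qintS_neq0 (i : nat) : qint (i.+1)%:Z != 0.
Proof.
rewrite /qint; apply: mulf_neq0; last by rewrite invr_eq0; exact: den_neq0.
rewrite -invr_expz; apply: brz_neq0; exact: ltn0Sn.
Qed.

Definition Aabs (z : int) : Qv := qq ^+ `|z|%N + qq ^- `|z|%N.

Lemma AabsE z : Aabs z = (u ^ z) ^+ 2 + ((u ^ z) ^+ 2)^-1.
Proof.
rewrite /Aabs /qq; case: z => n /=.
  by rewrite -!exprM mulnC.
rewrite addrC -!exprM mulnC.
have -> : u ^ Negz n = (u ^+ n.+1)^-1 by [].
by rewrite exprVn invrK -exprM.
Qed.

Lemma qbrE z : qbr z = u ^ z - (u ^ z)^-1.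
Proof. by rewrite /qbr invr_expz. Qed.

Lemma qintE z : qint z = (u ^ z - (u ^ z)^-1) / (u - u^-1).
Proof. by rewrite /qint invr_expz. Qed.

Definition PQ (z : int) (i : nat) : Qv := \prod_(k < i) qint (z - k%:Z).

Lemma fall_S1 (z : int) i : qbr_fall (z + 1) i.+1 = qbr (z + 1) * qbr_fall z i.
Proof.
rewrite /qbr_fall big_ord_recl subr0; congr (_ * _); apply: eq_bigr => k _.
congr qbr; rewrite lift0; lia.
Qed.

Lemma fall_Sr (z : int) i : qbr_fall z i.+1 = qbr_fall z i * qbr (z - i%:Z).
Proof. by rewrite /qbr_fall big_ord_recr. Qed.

Lemma PQ_S1 (z : int) i : PQ (z + 1) i.+1 = qint (z + 1) * PQ z i.
Proof.
rewrite /PQ big_ord_recl subr0; congr (_ * _); apply: eq_bigr => k _.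
congr qint; rewrite lift0; lia.
Qed.

Lemma PQ_Sr (z : int) i : PQ z i.+1 = PQ z i * qint (z - i%:Z).
Proof. by rewrite /PQ big_ord_recr. Qed.

Lemma qfact_S i : qfact i.+1 = qfact i * qint (i.+1)%:Z.
Proof. by rewrite /qfact big_nat_recr. Qed.

Lemma gamma0 m n : gamma m n 0 = 1.
Proof. by rewrite /gamma /qbr_fall /qbinom /qfact !big_ord0 big_geq // invr1 !mulr1. Qed.

Lemma gamma_0n n i : gamma 0 n i.+1 = 0.
Proof. by rewrite /gamma /qbr_fall big_ord_recl subr0 /qbr oppr0 subrr !mul0r. Qed.

Lemma GR (m n : int) (i : nat) :
  gamma (m + 1) n i.+1 = gamma m n i.+1 + gamma m n i * (Aabs (m + n - i%:Z + 1) - Aabs (m + 1)).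
Proof.
rewrite /gamma /qbinom -!/(PQ _ _).
have -> : m + 1 + n + 1 = (m + n + 1) + 1 by lia.
rewrite fall_S1 !fall_Sr PQ_S1 PQ_Sr qfact_S !(invfM (qfact i)).
set X1 := qbr_fall m i; set Y := qbr_fall n i; set Z := PQ _ i; set Wi := (qfact i)^-1.
apply: (@gen_comb Qv X1 Y Z Wi); first exact: qintS_neq0.
have ez : forall a b : int, u ^ (a + b) = u ^ a * u ^ b by move=> a b; apply: expfzDr; exact: vv_neq0.
have eN : forall a : int, u ^ (- a) = (u ^ a)^-1 by move=> a; rewrite invr_expz.
rewrite !qbrE !qintE !AabsE.
have -> : u ^ (m + 1) = u ^ m * u by rewrite ez expr1z.
have -> : u ^ (n - i%:Z) = u ^ n / u ^ i%:Z by rewrite ez eN.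
have -> : u ^ (m - i%:Z) = u ^ m / u ^ i%:Z by rewrite ez eN.
have -> : u ^ (m + n + 1 + 1) = u ^ m * u ^ n * u ^+ 2 by rewrite !ez expr1z expr2 !mulrA.
have -> : u ^ (m + n + 1 - i%:Z) = u ^ m * u ^ n * u / u ^ i%:Z by rewrite !ez eN expr1z.
have -> : u ^ (m + n - i%:Z + 1) = u ^ m * u ^ n * u / u ^ i%:Z.
  by rewrite !ez eN expr1z mulrAC.
have -> : u ^ (i.+1)%:Z = u ^ i%:Z * u by rewrite -addn1 PoszD ez expr1z.
have e0 := vv_neq0.
apply: key_gen; [exact: e0 | exact: expfz_neq0 e0 | exact: expfz_neq0 e0 | exact: expfz_neq0 e0 | exact: uu_neq0].
Qed.

Section Gen.
Variable K : fieldType.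
Lemma Tf_ext (a : K) (h h' : int -> K) k : (forall j, h j = h' j) -> Tf a h k = Tf a h' k.
Proof. by move=> e; rewrite /Tf !e. Qed.

Lemma Tf_sub (a : K) (h1 h2 : int -> K) k :
  Tf a (fun j => h1 j - h2 j) k = Tf a h1 k - Tf a h2 k.
Proof. rewrite /Tf; ring. Qed.

Lemma pc_P2 (a : K) (h : int -> K) k : pc (P2 a) h k = Tf a h (k - 1).
Proof.
rewrite (pc_N _ _ (size_poly 3 _)).
rewrite !big_ord_recl big_ord0 /= !coef_poly /= /bump /= /Tf !mul1r addr0.
rewrite addr0.
have -> : k - (1 + 0)%N%:Z = k - 1 by lia.
have -> : k - (1 + (1 + 0))%N%:Z = k - 1 - 1 by lia.
have -> : k - 1 + 1 = k by lia.
ring.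
Qed.

Lemma j0_P2 (a : K) : j0 (P2 a) = 0%N.
Proof.
have h : (P2 a)`_0 != 0 by rewrite coef_poly /= oner_eq0.
rewrite /j0; move: h; case: (polyseq (P2 a)) => [|x s] /=; first by rewrite eqxx.
by move=> ->.
Qed.
End Gen.

Local Notation C k := (ls_coef (sigma0 qq k)).
Local Notation c := (@ls_coef Qv).

Lemma C_rec (k j : int) : C k j = Tf (Aabs k) (C (k - 1)) j.
Proof. by rewrite /sigma0 sigma_rec L_mul_fac. Qed.

Lemma C0_lt j : j < 0 -> C 0 j = 0.
Proof.
move=> hj; rewrite /sigma0.
have e : sigma qq 0 = 1 by rewrite /= big_geq.
rewrite e (@CH _ 1 1 1 (pls 1)) ?mul1r ?oner_neq0 //.
  by rewrite ls_coef_lt.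
by move=> k; rewrite pls_mul mulr1.
Qed.

Definition Lhs (m n : int) (j : int) : Qv := c (ls_mul (sigma0 qq m) (sigma0 qq n)) j.

Lemma Lhs_L m n j : Lhs m n j = c (laurent (sigma qq m * sigma qq n)) j.
Proof. by rewrite MUL. Qed.

Lemma Lhs_rec m n j : Lhs (m + 1) n j = Tf (Aabs (m + 1)) (Lhs m n) j.
Proof.
rewrite Lhs_L sigma_rec addrK mulrAC L_mul_fac.
by apply: Tf_ext => j'; rewrite Lhs_L.
Qed.

Lemma Lhs_0 n j : Lhs 0 n j = C n j.
Proof.
rewrite Lhs_L.
have e : sigma qq 0 = 1 by rewrite /= big_geq.
by rewrite e mul1r.
Qed.

Lemma CB_pos (t : nat) j : j < - t%:Z -> C t j = 0.
Proof.
elim: t j => [|t IH] j hj; first by apply: C0_lt; lia.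
have -> : (t.+1 : int) = t%:Z + 1 by lia.
rewrite C_rec addrK /Tf !IH ?mulr0 ?subr0 ?addr0 //; lia.
Qed.

Lemma CB_neg (t : nat) j : j < t%:Z -> C (- t%:Z) j = 0.
Proof.
elim: t j => [|t IH] j hj; first by apply: C0_lt; lia.
set a := Aabs (- t%:Z).
apply: (@cancel_part _ (P2 a) _ (sigma0 qq (- t.+1%:Z)).1 (t.+1%:Z)) => //.
- exact: P2_neq0.
- by move=> j' hj'; rewrite ls_coef_lt.
move=> k hk; rewrite j0_P2 addr0 pc_P2.
have e := C_rec (- t%:Z) (k - 1).
have ee : - t%:Z - 1 = - t.+1%:Z by lia.
rewrite ee in e.
by rewrite -e IH //; lia.
Qed.

Lemma CB (k j : int) : j < - k -> C k j = 0.
Proof.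
case: k => t hj; first exact: CB_pos.
have -> : Negz t = - (t.+1)%:Z by lia.
apply: CB_neg; move: hj; lia.
Qed.

Lemma alg1 (K : fieldType) (g x y z A a : K) :
  g * x + g * y - a * (g * z) = g * (x + y - A * z) + g * (A - a) * z.
Proof. ring. Qed.

Definition Nb (m n j : int) : nat := (absz (j + m + n)).+1.
Definition Rs (m n j : int) : Qv := \sum_(i < Nb m n j) gamma m n i * C (m + n - i%:Z) j.

Lemma Rs_ext m n j M : (Nb m n j <= M)%N ->
  \sum_(i < M) gamma m n i * C (m + n - i%:Z) j = Rs m n j.
Proof.
move=> hM; rewrite /Rs (sum_ext (F := fun i : nat => gamma m n i * C (m + n - i%:Z) j) hM) //.
move=> i hi; rewrite CB ?mulr0 //; move: hi; rewrite /Nb; lia.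
Qed.

Lemma RB m n j : j < - (m + n) -> Rs m n j = 0.
Proof. by move=> hj; rewrite /Rs big1 // => i _; rewrite CB ?mulr0 //; lia. Qed.

Lemma Rs_0 n j : Rs 0 n j = C n j.
Proof.
rewrite /Rs /Nb big_ord_recl big1 ?addr0.
  by rewrite gamma0 mul1r add0r; congr (C _ j); lia.
by move=> i _; rewrite lift0 gamma_0n mul0r.
Qed.

Lemma CB_nat (k j : int) (i : nat) : ((absz (j + k)%R).+1 <= i)%N -> C (k - i%:Z) j = 0.
Proof. move=> hi; apply: CB; lia. Qed.

Lemma comb_gen (K : fieldType) (M : nat) (g g' E d : nat -> K) :
  g' 0%N = g 0%N -> (forall i, g' i.+1 = g i.+1 + g i * d i) -> E M = 0 ->
  \sum_(i < M.+1) g' i * E i = \sum_(i < M) (g i * E i + g i * d i * E i.+1).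
Proof.
move=> h0 hS hM.
rewrite big_split /=.
have -> : \sum_(i < M) g i * E i = \sum_(i < M.+1) g i * E i.
  by rewrite big_ord_recr /= hM mulr0 addr0.
rewrite !big_ord_recl h0 -addrA; congr (_ + _).
rewrite -big_split /=; apply: eq_bigr => i _.
have -> : bump 0 i = i.+1 by []. by rewrite hS mulrDl.
Qed.

Lemma Rs_rec_M m n j M : (Nb m n (j - 1) <= M)%N -> (Nb m n (j + 1) <= M)%N ->
  (Nb m n j <= M)%N -> (Nb (m + 1) n j <= M)%N ->
  Rs (m + 1) n j = Tf (Aabs (m + 1)) (Rs m n) j.
Proof.
move=> h1 h2 h3 h4.
set a := Aabs (m + 1).
pose E (i : nat) := C (m + 1 + n - i%:Z) j.
pose d (i : nat) := Aabs (m + n - i%:Z + 1) - a.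
have eL : Rs (m + 1) n j = \sum_(i < M.+1) gamma (m + 1) n i * E i.
  exact: (esym (@Rs_ext (m + 1) n j M.+1 (leqW h4))).
have eR : Tf a (Rs m n) j = \sum_(i < M) (gamma m n i * E i + gamma m n i * d i * E i.+1).
  rewrite /Tf -(@Rs_ext m n (j - 1) M h1) -(@Rs_ext m n (j + 1) M h2) -(@Rs_ext m n j M h3).
  rewrite mulr_sumr -big_split -sumrB /=.
  apply: eq_bigr => i _.
  have e := C_rec (m + n - i%:Z + 1) j; rewrite addrK in e.
  have eE : E i = C (m + n - i%:Z + 1) j by rewrite /E; congr (C _ j); lia.
  have eE1 : E i.+1 = C (m + n - i%:Z) j by rewrite /E; congr (C _ j); lia.
  by rewrite eE eE1 e /Tf /d -alg1.
rewrite eL eR; apply: comb_gen.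
- by rewrite !gamma0.
- by move=> i; rewrite GR.
rewrite /E CB_nat //.
have e : (absz (j + (m + 1 + n))) = (absz (j + (m + 1) + n)) by rewrite !addrA.
by rewrite e; rewrite /Nb in h4.
Qed.

Lemma Rs_rec m n j : Rs (m + 1) n j = Tf (Aabs (m + 1)) (Rs m n) j.
Proof.
apply: (@Rs_rec_M m n j (Nb m n (j - 1) + Nb m n (j + 1) + Nb m n j + Nb (m + 1) n j)%N).
- exact: leq_trans (leq_addr _ _) (leq_trans (leq_addr _ _) (leq_addr _ _)).
- exact: leq_trans (leq_addl _ _) (leq_trans (leq_addr _ _) (leq_addr _ _)).
- exact: leq_trans (leq_addl _ _) (leq_addr _ _).
- exact: leq_addl.
Qed.

Definition Dl (m n j : int) : Qv := Lhs m n j - Rs m n j.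

Lemma Dl_rec m n j : Dl (m + 1) n j = Tf (Aabs (m + 1)) (Dl m n) j.
Proof. by rewrite /Dl Lhs_rec Rs_rec Tf_sub. Qed.

Lemma Dl_0 n j : Dl 0 n j = 0.
Proof. by rewrite /Dl Lhs_0 Rs_0 subrr. Qed.

Lemma Dl_bd m n j : j < - ((absz (ls_mul (sigma0 qq m) (sigma0 qq n)).1)%:Z + (absz (m + n))%:Z) ->
  Dl m n j = 0.
Proof.
move=> hj; rewrite /Dl /Lhs RB; last by lia.
set e := (ls_mul (sigma0 qq m) (sigma0 qq n)).1 in hj.
have he : j < e by lia.
rewrite (ls_coef_lt he); exact: subr0.
Qed.

Lemma Dl_pos (t : nat) n j : Dl t%:Z n j = 0.
Proof.
elim: t j => [|t IH] j; first exact: Dl_0.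
have -> : (t.+1 : int) = t%:Z + 1 by lia.
rewrite Dl_rec (@Tf_ext _ _ _ (fun _ => 0)); last exact: IH.
rewrite /Tf mulr0 addr0 subr0. exact: erefl.
Qed.

Lemma Dl_neg (t : nat) n j : Dl (- t%:Z) n j = 0.
Proof.
elim: t j => [|t IH] j; first exact: Dl_0.
set a := Aabs (- t.+1%:Z + 1).
apply: (@cancel_full _ (P2 a) _ _ (P2_neq0 a) (@Dl_bd (- t.+1%:Z) n)).
move=> k; rewrite pc_P2 -Dl_rec.
have -> : - t.+1%:Z + 1 = - t%:Z by lia.
exact: IH.
Qed.

Lemma Dl_all m n j : Dl m n j = 0.
Proof.
case: m => t; first exact: Dl_pos.
have -> : Negz t = - (t.+1)%:Z by lia.
exact: Dl_neg.
Qed.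

Theorem proposition3p3 (m n : int) :
  forall k : int, exists N : nat, forall M : nat, (N <= M)%N ->
    ls_coef (ls_mul (sigma0 qq m) (sigma0 qq n)) k =
    \sum_(i < M) gamma m n i * ls_coef (sigma0 qq (m + n - i%:Z)) k.
Proof.
move=> k; exists (Nb m n k) => M hM.
rewrite (Rs_ext hM).
have := Dl_all m n k; rewrite /Dl /Lhs => /eqP; rewrite subr_eq0 => /eqP; exact.
Qed.
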